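(* Let $r\ge 1$ and let $\mathcal{R}$ be a block of $\mathcal{A}_e^r$. Then there exists $M_\ast$ such that for every integer $M\ge M_\ast$, with $\mathbf{M}=(0,M,2M,\dots,(e-1)M)$, every element of $\Psi_r(\mathrm{Str}(\mathcal{R};\mathbf{M}))$ is a Rouquier partition, and $\Psi_r(\mathrm{Str}(\mathcal{R};\mathbf{M}))$ is contained in a single $r$-Rouquier block of $\mathcal{A}_e$.
   Context: Fix an integer $e\ge 2$. A partition is a weakly decreasing sequence $\lambda=(\lambda_1,\lambda_2,\dots)$ of non-negative integers with finite sum $|\lambda|$; $\Lambda$ denotes the set of partitions and $\Lambda^{(m)}$ the set of $m$-multipartitions, i.e. $m$-tuples $\boldsymbol\lambda=(\lambda^{(1)},\dots,\lambda^{(m)})$ of partitions, with $|\boldsymbol\lambda|=\sum_k|\lambda^{(k)}|$. A $\beta$-set is a subset $B\subseteq\mathbb{Z}$ containing all sufficiently small integers and no sufficiently large ones. For $\lambda\in\Lambda$ and $s\in\mathbb{Z}$ set $B_s(\lambda)=\{\lambda_i-i+s : i\ge 1\}$; every $\beta$-set equals $B_s(\lambda)$ for a unique pair $(\lambda,s)$. Let $\mathcal{A}_e=\Lambda\times\mathbb{Z}$ (abacus configurations with $e$ runners) and $\mathcal{A}_e^m=\Lambda^{(m)}\times\mathbb{Z}^m$, where $(\boldsymbol\lambda,\mathbf{s})$ is identified with the $m$-tuple of $\beta$-sets $(B_{s_1}(\lambda^{(1)}),\dots,B_{s_m}(\lambda^{(m)}))$. Blocks: for $(\boldsymbol\lambda,\mathbf{s})\in\mathcal{A}_e^m$,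 its $e$-residue multiset is the multiset of the values $s_k+y-x \bmod e$ over all nodes $(x,y,k)$ with $x\ge1$, $1\le y\le\lambda^{(k)}_x$, $1\le k\le m$. Define $(\boldsymbol\lambda,\mathbf{s})\approx_e(\boldsymbol\mu,\mathbf{s}')$ iff $\mathbf{s}=\mathbf{s}'$, $|\boldsymbol\lambda|=|\boldsymbol\mu|$ and the $e$-residue multisets coincide. Its equivalence classes are called blocks. The map $\eta$: for $(\lambda,s)\in\mathcal{A}_e$ with $B=B_s(\lambda)$ and $0\le i<e$, the set $C_i=\{(b-i)/e : b\in B,\ b\equiv i \bmod e\}$ is a $\beta$-set, so $C_i=B_{t_i}(\rho_i)$ for a unique $(\rho_i,t_i)\in\Lambda\times\mathbb{Z}$; set $\eta(\lambda,s)=((\rho_0,\dots,\rho_{e-1}),(t_0,\dots,t_{e-1}))$. The $e$-weight of $\lambda$ is $\mathrm{wt}(\lambda)=\sum_i|\rho_i|$. Rouquier: $(\lambda,s)\in\mathcal{A}_e$ with $\eta(\lambda,s)=(\boldsymbol\rho,\mathbf{t})$ is a Rouquier partition if $\mathrm{wt}(\lambda)\le t_{i+1}-t_i+1$ for all $0\le i<e-1$, and an $r$-Rouquier partition if $\mathrm{wt}(\lambda)\le t_{i+1}-t_i+r$ for all $0\le i<e-1$. A block of $\mathcal{A}_e$ is an $r$-Rouquier block if all its elements are $r$-Rouquier partitions. Uglov's map: for $1\le k\le r$ define $\psi_k:\mathbb{Z}\to\mathbb{Z}$ by $\psi_k(ae+i)=((a+1)r-k)e+i$ for $a\in\mathbb{Z}$,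 $0\le i<e$. For $(\boldsymbol\lambda,\mathbf{s})\in\mathcal{A}_e^r$ the set $B=\bigsqcup_{k=1}^r\psi_k(B_{s_k}(\lambda^{(k)}))$ is a $\beta$-set, and $\Psi_r(\boldsymbol\lambda,\mathbf{s})$ is the unique $(\tilde\lambda,\tilde s)\in\mathcal{A}_e$ with $B_{\tilde s}(\tilde\lambda)=B$. Stretching: for $\mathbf{M}\in\mathbb{Z}^e$ and $(\lambda,s)\in\mathcal{A}_e$ with $\eta(\lambda,s)=(\boldsymbol\rho,(t_0,\dots,t_{e-1}))$, $\mathrm{Str}((\lambda,s);\mathbf{M})$ is the unique element of $\mathcal{A}_e$ whose image under $\eta$ is $(\boldsymbol\rho,(t_0+M_0,\dots,t_{e-1}+M_{e-1}))$. For $(\boldsymbol\lambda,\mathbf{s})\in\mathcal{A}_e^r$, $\mathrm{Str}((\boldsymbol\lambda,\mathbf{s});\mathbf{M})$ is obtained by applying this to each component $(\lambda^{(k)},s_k)$; for a subset $\mathcal{R}$, $\mathrm{Str}(\mathcal{R};\mathbf{M})$ is its image. *)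

(* Defs.v *)
From mathcomp Require Import all_boot all_order all_algebra.
From Stdlib Require Import ClassicalEpsilon.

Unset Printing Implicit Defensive.

Import Order.TTheory GRing.Theory Num.Theory.
Local Open Scope ring_scope.

Definition is_part (l : seq nat) : bool :=
  sorted geq l && all (fun x => (0 < x)%N) l.

Definition partition := {l : seq nat | is_part l}.

Definition part_nil : partition := exist _ [::] erefl.

(* lambda_i for i >= 1 (and 0 beyond the length) *)
Definition part (la : partition) (i : nat) : nat := nth 0%N (sval la) i.-1.

Definition psize (la : partition) : nat := sumn (sval la).

Definition conf := (partition * int)%type.
(* A_e^m = Lambda^(m) x Z^m ; components indexed by 'I_m (k = 0..m-1 stands for k+1) *)
Definition mconf (m : nat) := (('I_m -> partition) * ('I_m -> int))%type.

Definition single (c : conf) : mconf 1 := (fun _ => c.1, fun _ => c.2).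

Definition beta (s : int) (la : partition) (b : int) : Prop :=
  exists i : nat, (0 < i)%N /\ b = (part la i)%:Z - i%:Z + s.

Lemma conf_inhabited : inhabited conf.
Proof. exact: inhabits (part_nil, 0). Qed.

(* the unique (lambda, s) with B_s(lambda) = B  (for B a beta-set) *)
Definition beta_inv (B : int -> Prop) : conf :=
  epsilon conf_inhabited (fun p => forall b, beta p.2 p.1 b <-> B b).

Definition res_count (e : nat) (m : nat) (x : mconf m) (j : nat) : nat :=
  (\sum_(k < m) \sum_(1 <= a < (size (sval (x.1 k))).+1)
     \sum_(1 <= b < (part (x.1 k) a).+1)
        ((((x.2 k) + b%:Z - a%:Z) %% e%:Z)%Z == j%:Z : nat))%N.

Definition msize (m : nat) (x : mconf m) : nat := (\sum_(k < m) psize (x.1 k))%N.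

Definition mequiv (e m : nat) (x y : mconf m) : Prop :=
  (forall k, x.2 k = y.2 k) /\ msize m x = msize m y /\
  (forall j : 'I_e, res_count e m x j = res_count e m y j).

Definition is_mblock (e m : nat) (R : mconf m -> Prop) : Prop :=
  exists x, forall y, R y <-> mequiv e m x y.

(* blocks of A_e (identified with A_e^1) *)
Definition is_block (e : nat) (B : conf -> Prop) : Prop :=
  exists x, forall y, B y <-> mequiv e 1 (single x) (single y).

Definition runner (e : nat) (c : conf) (i : nat) : int -> Prop :=
  fun a => beta c.2 c.1 (a * e%:Z + i%:Z).

Definition eta_rho (e : nat) (c : conf) (i : nat) : partition :=
  (beta_inv (runner e c i)).1.
Definition eta_t (e : nat) (c : conf) (i : nat) : int :=
  (beta_inv (runner e c i)).2.

Definition wt (e : nat) (c : conf) : nat := (\sum_(i < e) psize (eta_rho e c i))%N.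

Definition rRouquier (e : nat) (r : int) (c : conf) : Prop :=
  forall i : nat, (i.+1 < e)%N -> (wt e c)%:Z <= eta_t e c i.+1 - eta_t e c i + r.

Definition Rouquier (e : nat) (c : conf) : Prop := rRouquier e 1 c.

Definition rRouquier_block (e : nat) (r : int) (B : conf -> Prop) : Prop :=
  is_block e B /\ forall c, B c -> rRouquier e r c.

Definition str (e : nat) (c : conf) (Mv : nat -> int) : conf :=
  epsilon conf_inhabited (fun c' => forall i : nat, (i < e)%N ->
     eta_rho e c' i = eta_rho e c i /\ eta_t e c' i = eta_t e c i + Mv i).

Definition mstr (e m : nat) (x : mconf m) (Mv : nat -> int) : mconf m :=
  (fun k => (str e (x.1 k, x.2 k) Mv).1, fun k => (str e (x.1 k, x.2 k) Mv).2).

Definition psi (e r k : nat) (b : int) : int :=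
  (((b %/ e%:Z)%Z + 1) * r%:Z - k%:Z) * e%:Z + (b %% e%:Z)%Z.

Definition Psi (e r : nat) (x : mconf r) : conf :=
  beta_inv (fun b => exists (k : 'I_r) (b' : int),
                beta (x.2 k) (x.1 k) b' /\ b = psi e r k.+1 b').

(* Main.v *)
Require Import Defs.
From mathcomp Require Import all_boot all_order all_algebra zify ring.
From Stdlib Require Import ClassicalEpsilon FunctionalExtensionality PropExtensionality.

Import Order.TTheory GRing.Theory Num.Theory.
Local Open Scope ring_scope.
Unset Printing Implicit Defensive.

Definition dec (P : Prop) : bool :=
  if excluded_middle_informative P then true else false.
Lemma decP P : reflect P (dec P).
Proof. rewrite /dec; case: excluded_middle_informative => H; by constructor. Qed.

Lemma pred_ext (B B' : int -> Prop) : (forall x, B x <-> B' x) -> B = B'.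
Proof. move=> H; apply: functional_extensionality => x;
  by apply: propositional_extensionality. Qed.

Definition ind (B : int -> Prop) (x : int) : int := if dec (B x) then 1 else 0.
Definition win (L : int) (N : nat) : seq int := [seq L + n%:Z | n <- iota 0 N].
Definition relw (f : int -> int) (B B' : int -> Prop) L N :=
  \sum_(x <- win L N) f x * (ind B x - ind B' x).
Definition goodw (B B' : int -> Prop) L (N : nat) :=
  forall x, (x < L \/ L + N%:Z <= x) -> (B x <-> B' x).

Lemma win_cat L a b : win L (a + b) = win L a ++ win (L + a%:Z) b.
Proof.
rewrite /win iotaD map_cat; congr (_ ++ _).
have -> : iota a b = [seq (a + i)%N | i <- iota 0 b] by rewrite -iotaDl addn0.
rewrite -map_comp; apply: eq_map => k /=.
by rewrite PoszD addrA.
Qed.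

Lemma mem_win L N z : z \in win L N -> L <= z < L + N%:Z.
Proof. case/mapP=> n; rewrite mem_iota add0n => /andP[_ Hn] ->; lia. Qed.

Lemma ind_iff B B' x : (B x <-> B' x) -> ind B x = ind B' x.
Proof.
move=> H; rewrite /ind; case: decP => h1; case: decP => h2 //; exfalso; tauto.
Qed.

Arguments ind_iff {B B' x}.

Lemma relw_zero f B B' L N :
  (forall z, L <= z < L + N%:Z -> (B z <-> B' z)) -> relw f B B' L N = 0.
Proof.
move=> H; rewrite /relw big1_seq // => z /andP[_ /mem_win Hz].
by rewrite (ind_iff (H z Hz)) subrr mulr0.
Qed.

Lemma relw_cat f B B' L a b :
  relw f B B' L (a + b) = relw f B B' L a + relw f B B' (L + a%:Z) b.
Proof. by rewrite /relw win_cat big_cat. Qed.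

Lemma relw_ext f B B' L N a c : goodw B B' L N ->
  relw f B B' (L - a%:Z) (a + N + c) = relw f B B' L N.
Proof.
move=> G; rewrite !relw_cat relw_zero ?add0r; last first.
  move=> z Hz; apply: G; left; lia.
rewrite (@relw_zero _ _ _ _ c) ?addr0.
  by congr relw; lia.
move=> z Hz; apply: G; right; lia.
Qed.

Lemma relw_indep f B B' L N L' N' : goodw B B' L N -> goodw B B' L' N' ->
  relw f B B' L N = relw f B B' L' N'.
Proof.
move=> G G'.
pose L0 := Num.min L L'; pose U0 := Num.max (L + N%:Z) (L' + N'%:Z).
have E1 : relw f B B' L N = relw f B B' L0 (absz (U0 - L0)%R).
  rewrite -(@relw_ext f B B' L N (absz (L - L0)%R) (absz (U0 - (L + N%:Z))%R) G).
  congr relw; rewrite /L0 /U0; lia.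
have E2 : relw f B B' L' N' = relw f B B' L0 (absz (U0 - L0)%R).
  rewrite -(@relw_ext f B B' L' N' (absz (L' - L0)%R) (absz (U0 - (L' + N'%:Z))%R) G').
  congr relw; rewrite /L0 /U0; lia.
by rewrite E1 E2.
Qed.

Lemma int_nat_inhabited : inhabited (int * nat). Proof. exact: inhabits (0, 0%N). Qed.
Definition wsel B B' := epsilon int_nat_inhabited (fun w => goodw B B' w.1 w.2).
Definition Rel f B B' := relw f B B' (wsel B B').1 (wsel B B').2.

Lemma RelE f B B' L N : goodw B B' L N -> Rel f B B' = relw f B B' L N.
Proof.
move=> G; rewrite /Rel /wsel; apply: relw_indep => //.
by apply: (epsilon_spec int_nat_inhabited (fun w => goodw B B' w.1 w.2)); exists (L, N).
Qed.

Lemma Rel_add_f f g B B' : Rel (fun x => f x + g x) B B' = Rel f B B' + Rel g B B'.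
Proof. by rewrite /Rel /relw -big_split; apply: eq_bigr => x _; rewrite mulrDl. Qed.
Lemma Rel_scale c f B B' : Rel (fun x => c * f x) B B' = c * Rel f B B'.
Proof. by rewrite /Rel /relw mulr_sumr; apply: eq_bigr => x _; rewrite mulrA. Qed.
Lemma Rel_eqf f g B B' : (forall x, f x = g x) -> Rel f B B' = Rel g B B'.
Proof. by move=> H; rewrite /Rel /relw; apply: eq_bigr => x _; rewrite H. Qed.
Lemma Rel_const0 B B' : Rel (fun _ => 0) B B' = 0.
Proof. by rewrite /Rel /relw big1 // => x _; rewrite mul0r. Qed.

Definition fit (B : int -> Prop) L U :=
  (forall x, x < L -> B x) /\ (forall x, U <= x -> ~ B x).
Definition bnd B := exists L U, fit B L U.

Lemma fit_mono B L U L' U' : fit B L U -> L' <= L -> U <= U' -> fit B L' U'.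
Proof.
move=> [H1 H2] h1 h2; split=> x hx; [apply: H1 | apply: H2]; lia.
Qed.

Lemma fit_good B B' L U : fit B L U -> fit B' L U -> goodw B B' L (absz (U - L)%R).
Proof.
move=> [H1 H2] [H1' H2'] x [hx|hx].
  by split=> _; [apply: H1' | apply: H1].
have hU : U <= x by lia.
by split=> h; [case: (H2 x hU) | case: (H2' x hU)].
Qed.

Arguments fit_good {B B' L U}.
Arguments RelE f {B B' L N}.

Lemma bnd2 B B' : bnd B -> bnd B' -> exists L U, fit B L U /\ fit B' L U.
Proof.
move=> [L [U H]] [L' [U' H']]; exists (Num.min L L'), (Num.max U U'); split.
  by apply: fit_mono H _ _; lia.
by apply: fit_mono H' _ _; lia.
Qed.

Lemma bnd3 B1 B2 B3 : bnd B1 -> bnd B2 -> bnd B3 ->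
  exists L U, [/\ fit B1 L U, fit B2 L U & fit B3 L U].
Proof.
move=> [L1 [U1 H1]] [L2 [U2 H2]] [L3 [U3 H3]].
exists (Num.min L1 (Num.min L2 L3)), (Num.max U1 (Num.max U2 U3)); split.
- by apply: fit_mono H1 _ _; lia.
- by apply: fit_mono H2 _ _; lia.
- by apply: fit_mono H3 _ _; lia.
Qed.

Arguments bnd2 {B B'}.
Arguments bnd3 {B1 B2 B3}.

Lemma Rel_add f B1 B2 B3 : bnd B1 -> bnd B2 -> bnd B3 ->
  Rel f B1 B3 = Rel f B1 B2 + Rel f B2 B3.
Proof.
move=> b1 b2 b3; have [L [U [h1 h2 h3]]] := bnd3 b1 b2 b3.
rewrite (RelE f (fit_good h1 h3)) (RelE f (fit_good h1 h2)) (RelE f (fit_good h2 h3)).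
rewrite /relw -big_split; apply: eq_bigr => x _ /=; ring.
Qed.

Arguments Rel_add f {B1 B2 B3}.

Lemma Rel_sym f B B' : bnd B -> bnd B' -> Rel f B B' = - Rel f B' B.
Proof.
move=> b b'; apply/eqP; rewrite -addr_eq0 -Rel_add //.
have [L [U [h1 h2]]] := bnd2 b b'.
rewrite (RelE f (fit_good h1 h1)) relw_zero //.
Qed.

Arguments Rel_sym f {B B'}.
Lemma Rel_point f B x : bnd B -> ~ B x ->
  Rel f (fun z => B z \/ z = x) B = f x.
Proof.
move=> [L [U h]] nBx.
have hL : L <= x by case: (lerP L x) => // /(proj1 h).
pose L0 := L; pose U0 := Num.max U (x + 1).
have h1 : fit B L0 U0 by apply: fit_mono h _ _; rewrite /L0 /U0; lia.
have h2 : fit (fun z => B z \/ z = x) L0 U0.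
  case: h1 => H1 H2; split=> z hz; first by left; apply: H1.
  by case=> [|hzx]; [apply: H2 | rewrite /U0 in hz; lia].
rewrite (RelE f (fit_good h2 h1)).
have -> : (absz (U0 - L0)%R) = ((absz (x - L0)%R) + 1 + (absz (U0 - (x + 1))%R))%N by rewrite /U0 /L0; lia.
rewrite !relw_cat relw_zero; last by move=> z hz; split; [case=> //; lia | left].
rewrite (@relw_zero _ _ _ _ (absz (U0 - (x + 1))%R)); last first.
  by move=> z hz; split; [case=> //; lia | left].
rewrite add0r addr0 /relw /win /= big_cons big_nil addr0.
have -> : L0 + (absz (x - L0)%R)%:Z + 0%N%:Z = x by rewrite /L0; lia.
rewrite /ind; case: decP => [_|[]]; last by right.
by case: decP => // _; rewrite subr0 mulr1.
Qed.

Definition E (s : int) : int -> Prop := fun z => z < s.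
Lemma fitE s : fit (E s) s s.
Proof. by split=> x hx; rewrite /E; lia. Qed.
Lemma bndE s : bnd (E s). Proof. by exists s, s; apply: fitE. Qed.

Lemma Rel_EE1 f t : Rel f (E (t + 1)) (E t) = f t.
Proof.
have -> : E (t + 1) = (fun z => E t z \/ z = t).
  by apply: pred_ext => z; rewrite /E; lia.
by apply: Rel_point; [apply: bndE | rewrite /E; lia].
Qed.

Lemma Rel1_EE s : Rel (fun _ => 1) (E s) (E 0) = s.
Proof.
have step : forall t, Rel (fun _ => 1) (E (t + 1)) (E 0) = Rel (fun _ => 1) (E t) (E 0) + 1.
  move=> t; rewrite (Rel_add _ (bndE _) (bndE t) (bndE _)) Rel_EE1; lia.
have h0 : Rel (fun _ => 1) (E 0) (E 0) = 0.
  by rewrite (RelE _ (fit_good (fitE 0) (fitE 0))) relw_zero.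
have key : forall t0 (n : nat), Rel (fun _ => 1) (E (t0 + n%:Z)) (E 0) = Rel (fun _ => 1) (E t0) (E 0) + n%:Z.
  move=> t0; elim=> [|n IH]; first by rewrite !addr0.
  have -> : t0 + n.+1%:Z = (t0 + n%:Z) + 1 by lia.
  by rewrite step IH; lia.
case: (lerP 0 s) => hs.
  have := key 0 (absz s); rewrite h0 add0r.
  have -> : ((absz s)%:Z) = s by lia.
  by [].
have := key s (absz s).
have -> : s + (absz s)%:Z = 0 by lia.
rewrite h0; lia.
Qed.

Definition shf (m : int) (X : int -> Prop) : int -> Prop := fun z => X (z - m).

Lemma fit_shf m X L U : fit X L U -> fit (shf m X) (L + m) (U + m).
Proof. move=> [H1 H2]; split=> x hx; rewrite /shf; [apply: H1 | apply: H2]; lia. Qed.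
Arguments fit_shf m {X L U}.
Lemma bnd_shf m X : bnd X -> bnd (shf m X).
Proof. move=> [L [U h]]; exists (L + m), (U + m); exact: fit_shf. Qed.
Lemma shfE m t : shf m (E t) = E (t + m).
Proof. by apply: pred_ext => z; rewrite /shf /E; lia. Qed.

Lemma win_shift L m N : win (L + m) N = [seq z + m | z <- win L N].
Proof. rewrite /win -map_comp; apply: eq_map => n /=; lia. Qed.

Lemma Rel_shf f m X Y : bnd X -> bnd Y ->
  Rel f (shf m X) (shf m Y) = Rel (fun z => f (z + m)) X Y.
Proof.
move=> bX bY; have [L [U [h1 h2]]] := bnd2 bX bY.
rewrite (RelE _ (fit_good h1 h2)) (RelE _ (fit_good (fit_shf m h1) (fit_shf m h2))).
have -> : (absz (U + m - (L + m))%R) = absz (U - L)%R by lia.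
rewrite /relw win_shift big_map; apply: eq_bigr => z _.
by rewrite /shf /ind !addrK.
Qed.

Definition run (m i : nat) (X : int -> Prop) : int -> Prop :=
  fun a => X (a * m%:Z + i%:Z).

Lemma fit_run m i X L U : (0 < m)%N -> (i < m)%N -> fit X L U ->
  fit (run m i X) (- (absz L)%:Z) (absz U)%:Z.
Proof.
move=> hm hi [H1 H2]; split=> a ha; rewrite /run.
  apply: H1; nia.
apply: H2; nia.
Qed.

Arguments fit_run {m i X L U}.
Lemma bnd_run m i X : (0 < m)%N -> (i < m)%N -> bnd X -> bnd (run m i X).
Proof. move=> hm hi [L [U h]]; do 2 eexists; exact: fit_run h. Qed.

Lemma bnd_runs m X : (0 < m)%N -> (forall i, (i < m)%N -> bnd (run m i X)) -> bnd X.
Proof.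
move=> hm H.
have : forall k, (k <= m)%N -> exists L U, forall i, (i < k)%N -> fit (run m i X) L U.
  elim=> [|k IH] hk; first by exists 0, 0.
  have [L [U HLU]] := IH (ltnW hk).
  have [L' [U' h']] := H k hk.
  exists (Num.min L L'), (Num.max U U') => i; rewrite ltnS leq_eqVlt => /orP[/eqP->|hi].
    by apply: fit_mono h' _ _; lia.
  by apply: fit_mono (HLU i hi) _ _; lia.
case/(_ m (leqnn m))=> L [U HLU].
have hm' : (0 < m%:Z) by lia.
have key : forall z, exists a i, (i < m)%N /\ z = a * m%:Z + i%:Z.
  move=> z; exists (z %/ m%:Z)%Z, (absz (z %% m%:Z)%Z); split.
    have := ltz_pmod z hm'; have := modz_ge0 z (lt0r_neq0 hm'); lia.
  rewrite abszE ger0_norm; [exact: divz_eq | exact: modz_ge0 (lt0r_neq0 hm')].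
exists (L * m%:Z), (U * m%:Z); split=> z; have [a [i [hi ->]]] := key z => hz.
  apply: (proj1 (HLU i hi)); nia.
apply: (proj2 (HLU i hi)); nia.
Qed.

Lemma win_mul L N m (h : int -> int) :
  \sum_(z <- win (L * m%:Z) (N * m)) h z =
  \sum_(a <- win L N) \sum_(i < m) h (a * m%:Z + i%:Z).
Proof.
elim: N => [|N IH]; first by rewrite mul0n /win /= !big_nil.
rewrite mulSn addnC win_cat big_cat IH -addn1 win_cat big_cat /=; congr (_ + _).
rewrite /win /= big_cons big_nil addr0 big_map.
have -> : iota 0 m = index_iota 0 m by rewrite /index_iota subn0.
rewrite big_mkord.
apply: eq_bigr => i _; congr h; nia.
Qed.

Lemma Rel_run f m X Y : (0 < m)%N -> bnd X -> bnd Y ->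
  Rel f X Y = \sum_(i < m) Rel (fun a => f (a * m%:Z + i%:Z)) (run m i X) (run m i Y).
Proof.
move=> hm bX bY; have [L [U [h1 h2]]] := bnd2 bX bY.
pose L' := - (absz L)%:Z; pose U' := (absz U)%:Z.
have g1 : fit X (L' * m%:Z) (U' * m%:Z) by apply: fit_mono h1 _ _; rewrite /L' /U'; nia.
have g2 : fit Y (L' * m%:Z) (U' * m%:Z) by apply: fit_mono h2 _ _; rewrite /L' /U'; nia.
rewrite (RelE _ (fit_good g1 g2)).
have -> : absz (U' * m%:Z - L' * m%:Z)%R = (absz (U' - L')%R * m)%N by rewrite /U' /L'; nia.
rewrite /relw win_mul exchange_big /=; apply: eq_bigr => i _.
have hi : (i < m)%N by [].
by rewrite (RelE _ (fit_good (fit_run hm hi h1) (fit_run hm hi h2))).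
Qed.
Arguments Rel_run f {m X Y}.
Arguments Rel_shf f m {X Y}.

Definition betal (s : int) (l : seq nat) : int -> Prop :=
  fun b => exists i : nat, (0 < i)%N /\ b = (nth 0%N l i.-1)%:Z - i%:Z + s.

Lemma betaE s la : beta s la = betal s (sval la).
Proof. by []. Qed.

Lemma betal_nil s : betal s [::] = E s.
Proof.
apply: pred_ext => b; rewrite /E; split.
  by case=> i [hi ->]; rewrite nth_nil; lia.
move=> hb; exists (absz (s - b))%R; split; first lia.
rewrite nth_nil; lia.
Qed.

Lemma betal_cons s x l :
  betal s (x :: l) = (fun b => betal (s - 1) l b \/ b = x%:Z - 1 + s).
Proof.
apply: pred_ext => b; split.
  case=> [[|[|i]]] [hi ->] //=; first by right.
  by left; exists i.+1; split => //=; lia.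
case=> [[i [hi ->]]|->].
  by exists i.+1; split => //; case: i hi => //= i _; lia.
by exists 1%N.
Qed.

Lemma bnd_addpt B x : bnd B -> bnd (fun z => B z \/ z = x).
Proof.
move=> [L [U [H1 H2]]]; exists L, (Num.max U (x + 1)); split=> z hz.
  by left; apply: H1.
case=> [|hzx]; [apply: H2 | ]; lia.
Qed.

Arguments bnd_addpt {B} x.
Lemma bnd_betal s l : bnd (betal s l).
Proof.
elim: l s => [|x l IH] s; first by rewrite betal_nil; apply: bndE.
by rewrite betal_cons; apply: bnd_addpt; apply: IH.
Qed.

Definition head0 (l : seq nat) := nth 0%N l 0.

Lemma betal_lt s l : sorted geq l -> forall b, betal s l b -> b < (head0 l)%:Z + s.
Proof.
elim: l s => [|x l IH] s hs b.
  by rewrite betal_nil /E /head0 /=; lia.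
rewrite betal_cons => -[hb|->]; last by rewrite /head0 /=; lia.
have hs' := path_sorted hs.
have := IH _ hs' _ hb.
have : (head0 l <= x)%N by case: l hs {IH hb hs'} => //= y l /andP[].
rewrite /head0 /=; lia.
Qed.

Arguments betal_lt {s l}.
Lemma Rel_betal f s l : is_part l ->
  Rel f (betal s l) (E s) =
  \sum_(i < size l) (f ((nth 0%N l i)%:Z - i.+1%:Z + s) - f (s - i.+1%:Z)).
Proof.
elim: l s => [|x l IH] s hl.
  rewrite betal_nil big_ord0.
  by rewrite (RelE _ (fit_good (fitE s) (fitE s))) relw_zero.
have hl' : is_part l.
  by case/andP: hl => h1 /andP[_ h2]; apply/andP; split; [exact: path_sorted h1 | exact: h2].
rewrite big_ord_recl /= betal_cons.
have bB := bnd_betal (s - 1) l.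
have nt : ~ betal (s - 1) l (x%:Z - 1 + s).
  move=> /(betal_lt (proj1 (andP hl'))).
  have : (head0 l <= x)%N by case/andP: hl; case: l {IH hl' bB} => //= y l /andP[].
  rewrite /head0; lia.
rewrite (Rel_add f (bnd_addpt _ bB) bB (bndE s)) Rel_point //.
rewrite (Rel_add f bB (bndE (s - 1)) (bndE s)) IH //.
rewrite (Rel_sym f (bndE _) (bndE _)).
have h := Rel_EE1 f (s - 1); rewrite subrK in h; rewrite h.
set S1 := \sum_(i < size l) _; set S2 := \sum_(i < _) _.
have -> : S2 = S1.
  rewrite /S1 /S2; apply: eq_bigr => i _; rewrite add0n /bump leq0n add1n.
  have e1 : (i.+2)%:Z = (i.+1)%:Z + 1 by rewrite -[in LHS]addn1 PoszD.
  by congr (f _ - f _); rewrite e1; ring.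
rewrite -/(size l); ring.
Qed.

Lemma Posz_sum I (r : seq I) (P : pred I) (F : I -> nat) :
  (\sum_(i <- r | P i) F i)%:Z = \sum_(i <- r | P i) (F i)%:Z.
Proof. by apply: (big_morph Posz PoszD). Qed.

Definition ch (B : int -> Prop) : int := Rel (fun _ => 1) B (E 0).

Lemma ch_betal s l : is_part l -> ch (betal s l) = s.
Proof.
move=> hl; rewrite /ch (Rel_add _ (bnd_betal s l) (bndE s) (bndE 0)) Rel1_EE Rel_betal //.
by rewrite big1 ?add0r // => i _; rewrite subrr.
Qed.

Arguments ch_betal s {l}.
Lemma size_betal s l : is_part l -> Rel id (betal s l) (E s) = (sumn l)%:Z.
Proof.
move=> hl; rewrite Rel_betal //.
have -> : \sum_(i < size l) ((nth 0%N l i)%:Z - i.+1%:Z + s - (s - i.+1%:Z)) =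
          \sum_(i < size l) (nth 0%N l i)%:Z.
  by apply: eq_bigr => i _; ring.
elim: l {hl} => [|x l IH]; first by rewrite big_ord0.
by rewrite big_ord_recl /= IH PoszD.
Qed.

Lemma divz_ch (e q r z : int) : 0 < e -> 0 <= r < e -> z = q * e + r ->
  (z %/ e)%Z = q /\ (z %% e)%Z = r.
Proof.
move=> he hr ->; split.
  rewrite divzMDl ?gt_eqF // divz_small ?addr0 //.
  by rewrite gtz0_abs.
by rewrite modzMDl modz_small.
Qed.

Arguments divz_ch {e} q {r z}.
Definition phi (e j : nat) (z : int) : int := ((z - j%:Z) %/ e%:Z)%Z.

Lemma phi_step e j z : (0 < e)%N -> (j < e)%N ->
  phi e j (z + 1) - phi e j z = (((z + 1) %% e%:Z)%Z == j%:Z)%:Z.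
Proof.
move=> he hj; rewrite /phi.
have he' : 0 < e%:Z by lia.
set q := ((z + 1) %/ e%:Z)%Z; set p := ((z + 1) %% e%:Z)%Z.
have hp : 0 <= p < e%:Z.
  by rewrite /p modz_ge0 ?gt_eqF //= ltz_pmod.
have hz : z + 1 = q * e%:Z + p by rewrite /q /p -divz_eq.
have hz' : z = q * e%:Z + p - 1 by rewrite -hz; ring.
case: (ltrgtP p j%:Z) => hpj.
- have r1 : 0 <= p - j%:Z + e%:Z < e%:Z by lia.
  have r2 : 0 <= p - j%:Z - 1 + e%:Z < e%:Z by lia.
  have e1 : z + 1 - j%:Z = (q - 1) * e%:Z + (p - j%:Z + e%:Z) by rewrite hz; ring.
  have e2 : z - j%:Z = (q - 1) * e%:Z + (p - j%:Z - 1 + e%:Z) by rewrite hz'; ring.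
  have [h1 _] := divz_ch (q - 1) he' r1 e1.
  have [h2 _] := divz_ch (q - 1) he' r2 e2.
  by rewrite h1 h2 subrr.
- have r1 : 0 <= p - j%:Z < e%:Z by lia.
  have r2 : 0 <= p - j%:Z - 1 < e%:Z by lia.
  have e1 : z + 1 - j%:Z = q * e%:Z + (p - j%:Z) by rewrite hz; ring.
  have e2 : z - j%:Z = q * e%:Z + (p - j%:Z - 1) by rewrite hz'; ring.
  have [h1 _] := divz_ch q he' r1 e1.
  have [h2 _] := divz_ch q he' r2 e2.
  by rewrite h1 h2 subrr.
- have r1 : 0 <= p - j%:Z < e%:Z by lia.
  have r2 : 0 <= p - j%:Z - 1 + e%:Z < e%:Z by lia.
  have e1 : z + 1 - j%:Z = q * e%:Z + (p - j%:Z) by rewrite hz; ring.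
  have e2 : z - j%:Z = (q - 1) * e%:Z + (p - j%:Z - 1 + e%:Z) by rewrite hz'; ring.
  have [h1 _] := divz_ch q he' r1 e1.
  have [h2 _] := divz_ch (q - 1) he' r2 e2.
  rewrite h1 h2 /=; ring.
Qed.

Lemma phi_run e j a i : (0 < e)%N -> (j < e)%N -> (i < e)%N ->
  phi e j (a * e%:Z + i%:Z) = a - (i < j)%N%:Z.
Proof.
move=> he hj hi; rewrite /phi; have he' : 0 < e%:Z by lia.
case: (ltnP i j) => hij /=.
  have r1 : 0 <= i%:Z - j%:Z + e%:Z < e%:Z by lia.
  have e1 : a * e%:Z + i%:Z - j%:Z = (a - 1) * e%:Z + (i%:Z - j%:Z + e%:Z) by ring.
  by have [-> _] := divz_ch (a - 1) he' r1 e1.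
have r1 : 0 <= i%:Z - j%:Z < e%:Z by lia.
have e1 : a * e%:Z + i%:Z - j%:Z = a * e%:Z + (i%:Z - j%:Z) by ring.
by have [-> _] := divz_ch a he' r1 e1; rewrite subr0.
Qed.

Lemma row_count e j (c : int) (m : nat) : (0 < e)%N -> (j < e)%N ->
  (\sum_(1 <= b < m.+1) (((c + b%:Z) %% e%:Z)%Z == j%:Z : nat))%:Z =
  phi e j (c + m%:Z) - phi e j c.
Proof.
move=> he hj; elim: m => [|m IH]; first by rewrite big_geq // addr0 subrr.
rewrite big_nat_recr //= PoszD IH.
have h := @phi_step e j (c + m%:Z) he hj.
have -> : c + m.+1%:Z = c + m%:Z + 1 by rewrite -addn1 PoszD addrA.
rewrite -h; ring.
Qed.

Lemma res_count_single e c j : (0 < e)%N -> (j < e)%N ->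
  (res_count e 1 (single c) j)%:Z = Rel (phi e j) (beta c.2 c.1) (E c.2).
Proof.
move=> he hj; case: c => [[l hl] s] /=.
rewrite betaE /= Rel_betal // /res_count big_ord1 /=.
rewrite big_add1 /= big_mkord Posz_sum; apply: eq_bigr => i _.
rewrite /part /=.
have -> : \sum_(1 <= b < (nth 0%N l i).+1) (((s + b%:Z - i.+1%:Z) %% e%:Z)%Z == j%:Z : nat) =
          \sum_(1 <= b < (nth 0%N l i).+1) ((((s - i.+1%:Z) + b%:Z) %% e%:Z)%Z == j%:Z : nat).
  by apply: eq_bigr => b _; congr (nat_of_bool (_ == _)); congr (_ %% _)%Z; ring.
rewrite row_count //; congr (phi e j _ - _); ring.
Qed.

Lemma betal_top s x l : betal s (x :: l) (x%:Z - 1 + s).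
Proof. by exists 1%N. Qed.

Lemma is_part_cons x l : is_part (x :: l) -> is_part l /\ (head0 l <= x)%N /\ (0 < x)%N.
Proof.
case/andP=> h1 /andP[h2 h3]; split; first by apply/andP; split; [exact: path_sorted h1|].
by split=> //; case: l h1 {h3} => //= y l /andP[].
Qed.

Arguments is_part_cons {x l}.
Lemma betal_exists B : bnd B -> exists s l, is_part l /\ betal s l = B.
Proof.
move=> [L [U h]].
have h' : fit B L (L + (absz (U - L)%R)%:Z) by apply: fit_mono h _ _; lia.
move: (absz (U - L)%R) B h' {h}; elim=> [|N IH] B h.
  exists L, [::]; split => //; rewrite betal_nil; apply: pred_ext => z; rewrite /E.
  case: h => H1 H2; split; first exact: H1.
  by move=> Bz; case: (ltrP z L) => // hz; case: (H2 z _ Bz); lia.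
pose x := L + N%:Z.
have [Bx|nBx] := classic (B x); last first.
  apply: IH; case: h => H1 H2; split=> // z hz Bz.
  have [ezx|ne] := eqVneq z x; first by rewrite ezx in Bz.
  by apply: (H2 z) => //; rewrite /x in ne *; lia.
pose B' := fun z => B z /\ z <> x.
have hB' : fit B' L (L + N%:Z).
  case: h => H1 H2; split=> z hz; first by split; [apply: H1 | rewrite /x; lia].
  case=> Bz nzx; apply: (H2 z _ Bz); rewrite /x in nzx; lia.
have [s' [l' [hl' eq']]] := IH B' hB'.
have Btop : B' ((head0 l')%:Z - 1 + s').
  by rewrite -eq' /head0; exists 1%N.
have htop : (head0 l')%:Z - 1 + s' < x.
  case: (ltrP _ x) => // hx; case: (proj2 hB' _ _ Btop); rewrite /x in hx *; lia.
have eqB : B = (fun z => B' z \/ z = x).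
  apply: pred_ext => z; split; last by case=> [[]|->].
  by move=> Bz; have [->|ne] := eqVneq z x; [right | left; split => //; apply/eqP].
case: (eqVneq (x - s') 0) => hd.
  have l'0 : l' = [::].
    case: l' hl' eq' Btop htop => // y l'' hl'' _ _; rewrite /head0 /=.
    have := (is_part_cons hl'').2.2; lia.
  exists (s' + 1), [::]; split => //.
  rewrite eqB -eq' l'0 !betal_nil; apply: pred_ext => z; rewrite /E; lia.
have hpos : (0 < absz (x - s')%R)%N by lia.
exists (s' + 1), (absz (x - s')%R :: l'); split.
  case/andP: hl' => hs hp; apply/andP; split; last by rewrite /= hpos.
  case: l' hs hp eq' Btop htop => //= y l'' -> _ _ _ htop2; rewrite andbT.
  rewrite /head0 /= /x in htop2 *; lia.
rewrite betal_cons eqB -eq' addrK; apply: pred_ext => z.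
have -> : (absz (x - s')%R)%:Z - 1 + (s' + 1) = x by lia.
by [].
Qed.

Lemma betal_inj s s' l l' : is_part l -> is_part l' -> betal s l = betal s' l' ->
  s = s' /\ l = l'.
Proof.
move=> hl hl' eq.
have ss : s = s' by rewrite -(ch_betal s hl) -(ch_betal s' hl') eq.
subst s'; split => //.
elim: l s l' hl hl' eq => [|x l IH] s [|y l'] hl hl' eq //.
- have := betal_top s y l'; rewrite -eq betal_nil /E.
  have := (is_part_cons hl').2.2; lia.
- have := betal_top s x l; rewrite eq betal_nil /E.
  have := (is_part_cons hl).2.2; lia.
have [hl1 [hx _]] := is_part_cons hl; have [hl1' [hy _]] := is_part_cons hl'.
have xy : x = y.
  have m1 : betal s (y :: l') (x%:Z - 1 + s) by rewrite -eq; apply: betal_top.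
  have m2 : betal s (x :: l) (y%:Z - 1 + s) by rewrite eq; apply: betal_top.
  have := betal_lt (proj1 (andP hl')) _ m1; have := betal_lt (proj1 (andP hl)) _ m2.
  rewrite /head0 /=; lia.
subst y; congr (_ :: _); apply: (IH (s - 1)) => //.
have key : forall l0, is_part (x :: l0) ->
    betal (s - 1) l0 = (fun b => betal s (x :: l0) b /\ b <> x%:Z - 1 + s).
  move=> l0 h0; have [h01 [h0x _]] := is_part_cons h0.
  apply: pred_ext => b; rewrite betal_cons; split.
    move=> hb; split; first by left.
    move=> hbt; have := betal_lt (proj1 (andP h01)) _ hb; rewrite hbt /head0 in h0x *; lia.
  by case=> -[|->].
by rewrite (key l hl) (key l' hl') eq.
Qed.

Arguments betal_exists {B}.
Arguments betal_inj {s s' l l'}.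
Lemma beta_inv_spec {B} : bnd B -> beta (beta_inv B).2 (beta_inv B).1 = B.
Proof.
move=> bB; have [s [l [hl eql]]] := betal_exists bB.
have H : forall b, beta (beta_inv B).2 (beta_inv B).1 b <-> B b.
  rewrite /beta_inv.
  apply: (epsilon_spec conf_inhabited (fun p : conf => forall b, beta p.2 p.1 b <-> B b)).
  by exists (exist _ l hl, s) => b /=; rewrite betaE /= eql.
by apply: pred_ext => b; apply: H.
Qed.

Lemma conf_eq (c c' : conf) : beta c.2 c.1 = beta c'.2 c'.1 -> c = c'.
Proof.
case: c => [[l hl] s]; case: c' => [[l' hl'] s'] /=; rewrite !betaE /= => h.
have [-> el] := betal_inj hl hl' h; subst l'.
by rewrite (eq_irrelevance hl hl').
Qed.

Lemma beta_inv_beta c : beta_inv (beta c.2 c.1) = c.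
Proof. apply: conf_eq; apply: beta_inv_spec; rewrite betaE; apply: bnd_betal. Qed.

Lemma bnd_beta s la : bnd (beta s la).
Proof. rewrite betaE; apply: bnd_betal. Qed.

Lemma ch_beta s la : ch (beta s la) = s.
Proof. rewrite betaE; apply: ch_betal; exact: (svalP la). Qed.

Lemma psize_beta s la : (psize la)%:Z = Rel id (beta s la) (E s).
Proof. rewrite betaE size_betal //; exact: (svalP la). Qed.

Lemma beta_shift s m la : beta (s + m) la = shf m (beta s la).
Proof.
apply: pred_ext => b; rewrite /shf; split; case=> i [hi hb]; exists i; split => //.
  by rewrite hb; ring.
by rewrite -[b](subrK m) hb; ring.
Qed.

Lemma decomp (e : nat) (b : int) : (0 < e)%N ->
  exists a (i : nat), (i < e)%N /\ b = a * e%:Z + i%:Z.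
Proof.
move=> he; have he' : 0 < e%:Z by lia.
exists (b %/ e%:Z)%Z, (absz (b %% e%:Z)%Z); split.
  have := ltz_pmod b he'; have := modz_ge0 b (lt0r_neq0 he'); lia.
rewrite abszE ger0_norm; [exact: divz_eq | exact: modz_ge0 (lt0r_neq0 he')].
Qed.

Lemma divmod_run (e : nat) a (i : nat) : (i < e)%N ->
  ((a * e%:Z + i%:Z) %/ e%:Z)%Z = a /\ ((a * e%:Z + i%:Z) %% e%:Z)%Z = i%:Z.
Proof. move=> hi; apply: divz_ch => //; lia. Qed.

Arguments divmod_run {e} a {i}.
Lemma run_ext (e : nat) X Y : (0 < e)%N ->
  (forall i, (i < e)%N -> run e i X = run e i Y) -> X = Y.
Proof.
move=> he H; apply: pred_ext => b; have [a [i [hi ->]]] := @decomp e b he.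
by have := H i hi => /(congr1 (fun F => F a)); rewrite /run => ->.
Qed.

Lemma bnd_runner e c i : (0 < e)%N -> (i < e)%N -> bnd (runner e c i).
Proof. move=> he hi; apply: bnd_run => //; apply: bnd_beta. Qed.

Arguments bnd_runner {e} c {i}.
Lemma eta_tE e c i : (0 < e)%N -> (i < e)%N ->
  eta_t e c i = ch (run e i (beta c.2 c.1)).
Proof.
move=> he hi; rewrite /eta_t.
have h := beta_inv_spec (bnd_runner c he hi).
by rewrite -{1}(ch_beta (beta_inv (runner e c i)).2 (beta_inv (runner e c i)).1) h.
Qed.

Arguments eta_tE {e} c {i}.
Lemma eta_rhoE e c i : (0 < e)%N -> (i < e)%N ->
  (psize (eta_rho e c i))%:Z =
  Rel id (run e i (beta c.2 c.1)) (E (ch (run e i (beta c.2 c.1)))).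
Proof.
move=> he hi; have h := beta_inv_spec (bnd_runner c he hi).
by rewrite /eta_rho (psize_beta (beta_inv (runner e c i)).2) h -(eta_tE c he hi).
Qed.

Lemma wtE e c : (0 < e)%N -> (wt e c)%:Z =
  \sum_(i < e) Rel id (run e i (beta c.2 c.1)) (E (ch (run e i (beta c.2 c.1)))).
Proof.
move=> he; rewrite /wt Posz_sum; apply: eq_bigr => i _; exact: eta_rhoE.
Qed.

Definition strset (e : nat) (Mv : nat -> int) (X : int -> Prop) : int -> Prop :=
  fun b => X (b - Mv (absz (b %% e%:Z)%Z) * e%:Z).

Lemma run_strset e Mv X i : (i < e)%N ->
  run e i (strset e Mv X) = shf (Mv i) (run e i X).
Proof.
move=> hi; apply: pred_ext => a; rewrite /run /shf /strset.
have [_ ->] := divmod_run a hi; rewrite absz_nat.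
by have -> : a * e%:Z + i%:Z - Mv i * e%:Z = (a - Mv i) * e%:Z + i%:Z by ring.
Qed.

Lemma bnd_strset e Mv X : (0 < e)%N -> bnd X -> bnd (strset e Mv X).
Proof.
move=> he bX; apply: (@bnd_runs e _ he) => i hi; rewrite run_strset //.
by apply: bnd_shf; apply: bnd_run.
Qed.

Lemma str_beta e c Mv : (0 < e)%N ->
  beta (str e c Mv).2 (str e c Mv).1 = strset e Mv (beta c.2 c.1).
Proof.
move=> he; set S := strset e Mv (beta c.2 c.1).
have bS : bnd S by apply: bnd_strset => //; apply: bnd_beta.
pose cs := beta_inv S.
have hcs : beta cs.2 cs.1 = S by apply: beta_inv_spec.
have key : forall c', beta c'.2 c'.1 = S -> forall i, (i < e)%N ->
    beta_inv (runner e c' i) = (eta_rho e c i, eta_t e c i + Mv i).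
  move=> c' hc' i hi; rewrite /runner.
  have -> : (fun a => beta c'.2 c'.1 (a * e%:Z + i%:Z)) = run e i S by rewrite hc'.
  rewrite run_strset //.
  have -> : run e i (beta c.2 c.1) = beta (eta_t e c i) (eta_rho e c i).
    by rewrite /eta_t /eta_rho beta_inv_spec //; apply: bnd_runner.
  by rewrite -beta_shift (beta_inv_beta (eta_rho e c i, eta_t e c i + Mv i)).
have spec : forall i, (i < e)%N -> eta_rho e (str e c Mv) i = eta_rho e c i /\
    eta_t e (str e c Mv) i = eta_t e c i + Mv i.
  rewrite /str; apply: (epsilon_spec conf_inhabited (fun c' => forall i : nat, (i < e)%N ->
     eta_rho e c' i = eta_rho e c i /\ eta_t e c' i = eta_t e c i + Mv i)).
  by exists cs => i hi; rewrite /eta_rho /eta_t (key cs hcs i hi).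
apply: (@run_ext e _ _ he) => i hi.
have -> : run e i (beta (str e c Mv).2 (str e c Mv).1) =
          beta (eta_t e (str e c Mv) i) (eta_rho e (str e c Mv) i).
  by rewrite /eta_t /eta_rho beta_inv_spec //; apply: bnd_runner.
have [-> ->] := spec i hi.
rewrite /S run_strset // beta_shift; congr shf.
by rewrite /eta_t /eta_rho beta_inv_spec //; apply: bnd_runner.
Qed.

Definition PS (e r : nat) (A : 'I_r -> int -> Prop) : int -> Prop :=
  fun b => exists (k : 'I_r) (b' : int), A k b' /\ b = psi e r k.+1 b'.

Lemma PsiE e r (x : mconf r) :
  Psi e r x = beta_inv (PS e r (fun k => beta (x.2 k) (x.1 k))).
Proof. by []. Qed.

Lemma run_PS e r A i rho (k : 'I_r) : (0 < e)%N -> (0 < r)%N -> (i < e)%N -> (rho < r)%N ->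
  (k + rho).+1 = r -> run r rho (run e i (PS e r A)) = run e i (A k).
Proof.
move=> he hr hi hrho hk; apply: pred_ext => q; rewrite /run /PS; split.
  case=> k' [b' [Ab' eqb]].
  have [a' [i' [hi' eb']]] := @decomp e b' he.
  have [d1 m1] := divmod_run a' hi'.
  move: eqb; rewrite /psi eb' d1 m1 => eqb.
  have [d2 m2] := divmod_run ((q * r%:Z + rho%:Z)) hi.
  have [d3 m3] := divmod_run (((a' + 1) * r%:Z - k'.+1%:Z)) hi'.
  have ii : i = i' by move: m2; rewrite eqb m3; lia.
  subst i'.
  have qq : q * r%:Z + rho%:Z = (a' + 1) * r%:Z - k'.+1%:Z by rewrite -d2 eqb d3.
  have k'lt := ltn_ord k'.
  have aq : a' = q by nia.
  subst a'.
  have kk : k' = k by apply: val_inj => /=; lia.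
  by subst k'; rewrite eb' in Ab'.
move=> Ak; exists k, (q * e%:Z + i%:Z); split => //.
have [d1 m1] := divmod_run q hi.
rewrite /psi d1 m1; congr (_ * _ + _); lia.
Qed.

Lemma bnd_PS e r A : (0 < e)%N -> (0 < r)%N -> (forall k, bnd (A k)) -> bnd (PS e r A).
Proof.
move=> he hr bA; apply: (@bnd_runs e _ he) => i hi.
apply: (@bnd_runs r _ hr) => rho hrho.
have hk : (r - rho.+1 < r)%N by lia.
rewrite (@run_PS e r A i rho (Ordinal hk)) //=; last by lia.
by apply: bnd_run.
Qed.

Lemma run_shf_mul r rho m Y : (rho < r)%N ->
  run r rho (shf (m * r%:Z) Y) = shf m (run r rho Y).
Proof.
move=> hr; apply: pred_ext => q; rewrite /run /shf.
by have -> : q * r%:Z + rho%:Z - m * r%:Z = (q - m) * r%:Z + rho%:Z by ring.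
Qed.

Definition Aof r (x : mconf r) : 'I_r -> int -> Prop := fun k => beta (x.2 k) (x.1 k).
Arguments Aof {r}.
Definition MvM (M : int) : nat -> int := fun i => i%:Z * M.

Lemma Aof_mstr e r x M : (0 < e)%N ->
  Aof (mstr e r x (MvM M)) = (fun k => strset e (MvM M) (Aof x k)).
Proof.
move=> he; apply: functional_extensionality => k.
by rewrite /Aof /mstr /= str_beta.
Qed.

Lemma run_PS_M e r x M i : (0 < e)%N -> (0 < r)%N -> (i < e)%N ->
  run e i (PS e r (Aof (mstr e r x (MvM M)))) = shf ((MvM M i) * r%:Z) (run e i (PS e r (Aof x))).
Proof.
move=> he hr hi; apply: (@run_ext r _ _ hr) => rho hrho.
have hk : (r - rho.+1 < r)%N by lia.
have kk : ((Ordinal hk) + rho).+1 = r by rewrite /=; lia.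
rewrite run_shf_mul // (@run_PS e r _ i rho (Ordinal hk) he hr hi hrho kk).
rewrite (@run_PS e r _ i rho (Ordinal hk) he hr hi hrho kk) Aof_mstr //.
by rewrite run_strset.
Qed.

Lemma Rel_affine c1 c0 X Y :
  Rel (fun a => c1 * a + c0) X Y = c1 * Rel id X Y + c0 * Rel (fun _ => 1) X Y.
Proof.
rewrite Rel_add_f Rel_scale; congr (_ + _).
by rewrite -Rel_scale; apply: Rel_eqf => a; rewrite mulr1.
Qed.

Lemma Rel1_diff X Y : bnd X -> bnd Y -> Rel (fun _ => 1) X Y = ch X - ch Y.
Proof.
move=> bX bY; rewrite /ch (Rel_add _ bX (bndE 0) bY) (Rel_sym _ (bndE 0) bY).
by [].
Qed.

Lemma ch_E s : ch (E s) = s. Proof. exact: Rel1_EE. Qed.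

Lemma sum_delta e (f : nat -> int) i : (i < e)%N ->
  \sum_(k < e) ((k == i :> nat)%:Z * f k) = f i.
Proof.
move=> hi; rewrite (bigD1 (Ordinal hi)) //= eqxx mul1r big1 ?addr0 // => k hk.
have -> : (k == i :> nat) = false; last by rewrite mul0r.
by apply/negbTE; apply: contra hk => /eqP h; apply/eqP; apply: val_inj.
Qed.

Arguments sum_delta {e} f {i}.
Lemma AL e (al de al' de' : nat -> int) :
  (forall j, (j < e)%N -> \sum_(i < e) (al i - (i < j)%N%:Z * de i) =
                         \sum_(i < e) (al' i - (i < j)%N%:Z * de' i)) ->
  \sum_(i < e) de i = \sum_(i < e) de' i ->
  \sum_(i < e) al i = \sum_(i < e) al' i /\ forall i, (i < e)%N -> de i = de' i.
Proof.
move=> H Hs.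
pose P (f : nat -> int) j := \sum_(i < e) ((i < j)%N%:Z * f i).
have split : forall (a d : nat -> int) j,
    \sum_(i < e) (a i - (i < j)%N%:Z * d i) = \sum_(i < e) a i - P d j.
  by move=> a d j; rewrite /P sumrB.
have step : forall (f : nat -> int) i, (i < e)%N -> P f i.+1 - P f i = f i.
  move=> f i hi; rewrite /P -sumrB -(sum_delta f hi); apply: eq_bigr => k _.
  rewrite -mulrBl; congr (_ * _); rewrite ltnS leq_eqVlt.
  by case: (ltngtP k i).
have Pe : forall f, P f e = \sum_(i < e) f i.
  by move=> f; rewrite /P; apply: eq_bigr => i _; rewrite ltn_ord mul1r.
case: (posnP e) => [e0|he].
  by subst e; split => [|//]; rewrite !big_ord0.
have P0 : forall f, P f 0%N = 0.
  by move=> f; rewrite /P big1 // => i _; rewrite ltn0 mul0r.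
have a0 : \sum_(i < e) al i = \sum_(i < e) al' i.
  by have := H 0%N he; rewrite !split !P0 !subr0.
split => //.
have PP : forall j, (j <= e)%N -> P de j = P de' j.
  move=> j; rewrite leq_eqVlt => /orP[/eqP->|hj]; first by rewrite !Pe.
  have := H j hj; rewrite !split a0 => h; apply: oppr_inj; apply: (addrI (\sum_(i < e) al' i)).
  by [].
move=> i hi; rewrite -(step de i hi) -(step de' i hi) !PP //; exact: ltnW.
Qed.

Arguments AL {e al de al' de'}.
Definition alc e (c : conf) i := Rel id (run e i (beta c.2 c.1)) (run e i (E c.2)).
Definition dec1 e (c : conf) i := Rel (fun _ => 1) (run e i (beta c.2 c.1)) (run e i (E c.2)).

Lemma count_decomp e c j : (0 < e)%N -> (j < e)%N ->
  (res_count e 1 (single c) j)%:Z = \sum_(i < e) (alc e c i - (i < j)%N%:Z * dec1 e c i).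
Proof.
move=> he hj; rewrite res_count_single // (Rel_run _ he (bnd_beta _ _) (bndE _)).
apply: eq_bigr => i _.
rewrite (@Rel_eqf _ (fun a => 1 * a + (- (i < j)%N%:Z))); last first.
  by move=> a; rewrite phi_run // mul1r.
by rewrite Rel_affine mul1r mulNr.
Qed.

Lemma dec1_sum e c : (0 < e)%N -> \sum_(i < e) dec1 e c i = 0.
Proof.
move=> he; have h := Rel_run (fun _ => 1) he (bnd_beta c.2 c.1) (bndE c.2).
rewrite /dec1 -h.
by rewrite Rel1_diff ?ch_beta ?ch_E ?subrr //; [apply: bnd_beta | apply: bndE].
Qed.

Arguments dec1_sum {e} c.
Lemma alc_split e c i : (0 < e)%N -> (i < e)%N ->
  alc e c i = Rel id (run e i (beta c.2 c.1)) (E (ch (run e i (beta c.2 c.1)))) +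
              Rel id (E (ch (run e i (beta c.2 c.1)))) (run e i (E c.2)).
Proof.
move=> he hi; rewrite /alc (@Rel_add id _ (E (ch (run e i (beta c.2 c.1)))) _) //.
- by apply: bnd_run => //; apply: bnd_beta.
- exact: bndE.
- by apply: bnd_run => //; apply: bndE.
Qed.

Lemma mequiv1_transfer e c c' : (0 < e)%N -> mequiv e 1 (single c) (single c') ->
  (forall i, (i < e)%N -> eta_t e c i = eta_t e c' i) /\ wt e c = wt e c'.
Proof.
move=> he [Hs [_ Hc]].
have es : c'.2 = c.2 by have := Hs ord0.
have Hcnt : forall j, (j < e)%N ->
  \sum_(i < e) (alc e c i - (i < j)%N%:Z * dec1 e c i) =
  \sum_(i < e) (alc e c' i - (i < j)%N%:Z * dec1 e c' i).
  move=> j hj; rewrite -!count_decomp //.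
  by have := Hc (Ordinal hj) => /= ->.
have [hal hde] := AL Hcnt (etrans (dec1_sum c he) (esym (dec1_sum c' he))).
have ht : forall i, (i < e)%N -> eta_t e c i = eta_t e c' i.
  move=> i hi; rewrite !eta_tE //.
  have := hde i hi; rewrite /dec1 !Rel1_diff ?es; last 4 first.
  - by apply: bnd_run => //; apply: bnd_beta.
  - by apply: bnd_run => //; apply: bndE.
  - by apply: bnd_run => //; apply: bnd_beta.
  - by apply: bnd_run => //; apply: bndE.
  by move/addIr.
split => //.
apply/eqP; rewrite -eqz_nat; apply/eqP; rewrite !wtE //.
have ex : forall d : conf, \sum_(i < e) Rel id (run e i (beta d.2 d.1)) (E (ch (run e i (beta d.2 d.1)))) =
   \sum_(i < e) alc e d i - \sum_(i < e) Rel id (E (ch (run e i (beta d.2 d.1)))) (run e i (E d.2)).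
  move=> d; apply/eqP; rewrite eq_sym subr_eq -big_split /=; apply/eqP; apply: eq_bigr => i _.
  by rewrite alc_split.
rewrite !ex hal; congr (_ - _); apply: eq_bigr => i _.
by rewrite -!eta_tE // ht // es.
Qed.

Lemma rRouq_tr e (r : int) c c' : (forall i, (i < e)%N -> eta_t e c i = eta_t e c' i) ->
  wt e c = wt e c' -> rRouquier e r c -> rRouquier e r c'.
Proof.
move=> ht hw H i hi; rewrite -hw -!ht //; [exact: H | exact: ltnW].
Qed.

Lemma rRouq_mono e (r r' : int) c : r <= r' -> rRouquier e r c -> rRouquier e r' c.
Proof. move=> hr H i hi; have := H i hi; lia. Qed.

Definition xc r (x : mconf r) (k : 'I_r) : conf := (x.1 k, x.2 k).
Arguments xc {r}.

Definition GE e r (x : mconf r) M : int -> Prop :=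
  PS e r (fun k => strset e (MvM M) (E (x.2 k))).
Definition PSM e r (x : mconf r) M : int -> Prop :=
  PS e r (Aof (mstr e r x (MvM M))).

Lemma bnd_PSM e r x M : (0 < e)%N -> (0 < r)%N -> bnd (PSM e r x M).
Proof.
move=> he hr; rewrite /PSM Aof_mstr //; apply: bnd_PS => // k.
by apply: bnd_strset => //; apply: bnd_beta.
Qed.

Lemma bnd_GE e r x M : (0 < e)%N -> (0 < r)%N -> bnd (GE e r x M).
Proof.
move=> he hr; apply: bnd_PS => // k; apply: bnd_strset => //; apply: bndE.
Qed.

Arguments bnd_PSM {e r} x M.
Arguments bnd_GE {e r} x M.
Lemma F_core e r x M f (al : int) (be : nat -> int) :
  (0 < e)%N -> (0 < r)%N ->
  (forall q i, (i < e)%N -> f (q * e%:Z + i%:Z) = al * q + be i) ->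
  Rel f (PSM e r x M) (GE e r x M) =
  \sum_(i < e) \sum_(k < r) (al * r%:Z * alc e (xc x k) i +
        (al * (i%:Z * M * r%:Z + (r - k.+1)%N%:Z) + be i) * dec1 e (xc x k) i).
Proof.
move=> he hr hf.
rewrite (Rel_run f he (bnd_PSM x M he hr) (bnd_GE x M he hr)).
apply: eq_bigr => i _.
have hi : (i < e)%N by [].
rewrite (@Rel_eqf _ (fun a => al * a + be i)); last by move=> a; apply: hf.
have b1 : bnd (run e i (PSM e r x M)) by apply: bnd_run => //; apply: bnd_PSM.
have b2 : bnd (run e i (GE e r x M)) by apply: bnd_run => //; apply: bnd_GE.
rewrite (Rel_run _ hr b1 b2) (reindex_inj rev_ord_inj) /=.
apply: eq_bigr => k _.
have kk : (k + (r - k.+1)).+1 = r by have := ltn_ord k; lia.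
have hrho : (r - k.+1 < r)%N by lia.
rewrite /PSM /GE Aof_mstr //.
rewrite (@run_PS e r _ i (r - k.+1) k he hr hi hrho kk).
rewrite (@run_PS e r _ i (r - k.+1) k he hr hi hrho kk).
rewrite !run_strset // Rel_shf; last 2 first.
- by apply: bnd_run => //; apply: bnd_beta.
- by apply: bnd_run => //; apply: bndE.
rewrite (@Rel_eqf _ (fun q => (al * r%:Z) * q + (al * (i%:Z * M * r%:Z + (r - k.+1)%N%:Z) + be i))); last first.
  by move=> q; rewrite /MvM; ring.
by rewrite Rel_affine.
Qed.

Arguments F_core {e r} x M {f al be}.
Definition ahat e r (x : mconf r) i := \sum_(k < r) alc e (xc x k) i.
Definition dhat e r (x : mconf r) i := \sum_(k < r) dec1 e (xc x k) i.

Lemma T_simpl e r x M (al : int) (be : nat -> int) : (0 < e)%N ->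
  \sum_(i < e) \sum_(k < r) (al * r%:Z * alc e (xc x k) i +
        (al * (i%:Z * M * r%:Z + (r - k.+1)%N%:Z) + be i) * dec1 e (xc x k) i) =
  al * r%:Z * \sum_(i < e) ahat e r x i +
  \sum_(i < e) (al * (i%:Z * M * r%:Z) + be i) * dhat e r x i.
Proof.
move=> he.
have H : forall i : 'I_e, \sum_(k < r) (al * r%:Z * alc e (xc x k) i +
        (al * (i%:Z * M * r%:Z + (r - k.+1)%N%:Z) + be i) * dec1 e (xc x k) i) =
   al * r%:Z * ahat e r x i + (al * (i%:Z * M * r%:Z) + be i) * dhat e r x i +
   \sum_(k < r) (al * (r - k.+1)%N%:Z) * dec1 e (xc x k) i.
  move=> i; rewrite /ahat /dhat !mulr_sumr -!big_split; apply: eq_bigr => k _ /=; ring.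
rewrite (eq_bigr _ (fun i _ => H i)) !big_split /=.
have -> : \sum_(i < e) \sum_(k < r) al * (r - k.+1)%N%:Z * dec1 e (xc x k) i = 0.
  rewrite exchange_big /= big1 // => k _.
  by rewrite -mulr_sumr dec1_sum ?mulr0.
by rewrite addr0 -mulr_sumr.
Qed.

Lemma res_count_r e r (x : mconf r) j :
  res_count e r x j = (\sum_(k < r) res_count e 1 (single (xc x k)) j)%N.
Proof. by rewrite /res_count; apply: eq_bigr => k _; rewrite big_ord1. Qed.

Lemma tot_decomp e r (x : mconf r) j : (0 < e)%N -> (j < e)%N ->
  (res_count e r x j)%:Z = \sum_(i < e) (ahat e r x i - (i < j)%N%:Z * dhat e r x i).
Proof.
move=> he hj; rewrite res_count_r Posz_sum.
under eq_bigr => k _ do rewrite count_decomp //.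
rewrite exchange_big /=; apply: eq_bigr => i _.
by rewrite /ahat /dhat mulr_sumr -sumrB.
Qed.

Lemma dhat_sum e r x : (0 < e)%N -> \sum_(i < e) dhat e r x i = 0.
Proof.
move=> he; rewrite /dhat exchange_big /= big1 // => k _; exact: dec1_sum.
Qed.

Lemma F_eq e r (x x' : mconf r) M f (al : int) (be : nat -> int) :
  (0 < e)%N -> (0 < r)%N ->
  (forall q i, (i < e)%N -> f (q * e%:Z + i%:Z) = al * q + be i) ->
  mequiv e r x x' ->
  Rel f (PSM e r x M) (GE e r x M) = Rel f (PSM e r x' M) (GE e r x' M).
Proof.
move=> he hr hf [Hs [_ Hc]].
rewrite (F_core x M he hr hf) (F_core x' M he hr hf) !T_simpl //.
have Hcnt : forall j, (j < e)%N ->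
  \sum_(i < e) (ahat e r x i - (i < j)%N%:Z * dhat e r x i) =
  \sum_(i < e) (ahat e r x' i - (i < j)%N%:Z * dhat e r x' i).
  by move=> j hj; rewrite -!tot_decomp // (Hc (Ordinal hj)).
have [ha hd] := AL Hcnt (etrans (dhat_sum e r x he) (esym (dhat_sum e r x' he))).
rewrite ha; congr (_ + _); apply: eq_bigr => i _; by rewrite hd.
Qed.

Definition PP e r (x : mconf r) M : conf := Psi e r (mstr e r x (MvM M)).

Lemma beta_PP e r x M : (0 < e)%N -> (0 < r)%N ->
  beta (PP e r x M).2 (PP e r x M).1 = PSM e r x M.
Proof.
move=> he hr; rewrite /PP PsiE; exact: (beta_inv_spec (bnd_PSM x M he hr)).
Qed.

Lemma ch_PP e r x M : (0 < e)%N -> (0 < r)%N -> (PP e r x M).2 = ch (PSM e r x M).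
Proof. by move=> he hr; rewrite -beta_PP // ch_beta. Qed.

Lemma PP_ch_eq e r x x' M : (0 < e)%N -> (0 < r)%N -> mequiv e r x x' ->
  (PP e r x M).2 = (PP e r x' M).2.
Proof.
move=> he hr hm; have Hs' : x.2 = x'.2.
  by apply: functional_extensionality => k; case: hm => H _; exact: H.
have GEq : GE e r x M = GE e r x' M by rewrite /GE Hs'.
rewrite !ch_PP // /ch.
rewrite (Rel_add _ (bnd_PSM x M he hr) (bnd_GE x M he hr) (bndE 0)).
rewrite (Rel_add _ (bnd_PSM x' M he hr) (bnd_GE x' M he hr) (bndE 0)).
rewrite -GEq (@F_eq e r x x' M (fun _ => 1) 0 (fun _ => 1)) // ?GEq //.
by move=> q i _; rewrite mul0r add0r.
Qed.

Arguments PP_ch_eq {e r x x'} M.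
Lemma PP_Rel_eq e r x x' M f (al : int) (be : nat -> int) :
  (0 < e)%N -> (0 < r)%N ->
  (forall q i, (i < e)%N -> f (q * e%:Z + i%:Z) = al * q + be i) ->
  mequiv e r x x' ->
  Rel f (beta (PP e r x M).2 (PP e r x M).1) (E (PP e r x M).2) =
  Rel f (beta (PP e r x' M).2 (PP e r x' M).1) (E (PP e r x' M).2).
Proof.
move=> he hr hf hm; have Hs' : x.2 = x'.2.
  by apply: functional_extensionality => k; case: hm => H _; exact: H.
have GEq : GE e r x M = GE e r x' M by rewrite /GE Hs'.
rewrite !beta_PP // -(PP_ch_eq M he hr hm).
set S := (PP e r x M).2.
rewrite (Rel_add _ (bnd_PSM x M he hr) (bnd_GE x M he hr) (bndE S)).
rewrite (Rel_add _ (bnd_PSM x' M he hr) (bnd_GE x' M he hr) (bndE S)).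
by rewrite (@F_eq e r x x' M f al be he hr hf hm) GEq.
Qed.

Lemma PF e r x x' M : (0 < e)%N -> (0 < r)%N -> mequiv e r x x' ->
  mequiv e 1 (single (PP e r x M)) (single (PP e r x' M)).
Proof.
move=> he hr hm; split; first by move=> k /=; exact: PP_ch_eq.
split.
  rewrite /msize !big_ord1 /=; apply/eqP; rewrite -eqz_nat; apply/eqP.
  rewrite (psize_beta (PP e r x M).2) (psize_beta (PP e r x' M).2).
  apply: (@PP_Rel_eq e r x x' M id e%:Z (fun i => i%:Z)) => // q i _.
  by rewrite mulrC.
move=> j; apply/eqP; rewrite -eqz_nat; apply/eqP.
rewrite !res_count_single //.
apply: (@PP_Rel_eq e r x x' M (phi e j) 1 (fun i => - (i < j)%N%:Z)) => // q i hi.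
by rewrite phi_run // mul1r.
Qed.

Lemma ch_shf m Y : bnd Y -> ch (shf m Y) = ch Y + m.
Proof.
move=> bY; rewrite /ch (Rel_add _ (bnd_shf m Y bY) (bndE m) (bndE 0)) Rel1_EE.
have -> : E m = shf m (E 0) by rewrite shfE add0r.
by rewrite Rel_shf //; exact: bndE.
Qed.

Lemma Rel_id_shf m Y : bnd Y -> Rel id (shf m Y) (E (ch Y + m)) = Rel id Y (E (ch Y)).
Proof.
move=> bY; rewrite -shfE Rel_shf //; last exact: bndE.
rewrite (@Rel_eqf _ (fun z => 1 * z + m)); last by move=> z; rewrite mul1r.
rewrite Rel_affine mul1r Rel1_diff //; last exact: bndE.
by rewrite ch_E subrr mulr0 addr0.
Qed.

Definition Yr e r (x : mconf r) i := run e i (PS e r (Aof x)).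

Lemma bnd_Yr e r x i : (0 < e)%N -> (0 < r)%N -> (i < e)%N -> bnd (Yr e r x i).
Proof.
move=> he hr hi; apply: bnd_run => //; apply: bnd_PS => // k; exact: bnd_beta.
Qed.

Lemma run_PP e r x M i : (0 < e)%N -> (0 < r)%N -> (i < e)%N ->
  run e i (beta (PP e r x M).2 (PP e r x M).1) = shf (i%:Z * M * r%:Z) (Yr e r x i).
Proof. by move=> he hr hi; rewrite beta_PP // /PSM run_PS_M. Qed.

Lemma PP_eta e r x M i : (0 < e)%N -> (0 < r)%N -> (i < e)%N ->
  eta_t e (PP e r x M) i = ch (Yr e r x i) + i%:Z * M * r%:Z.
Proof. by move=> he hr hi; rewrite eta_tE // run_PP // ch_shf //; apply: bnd_Yr. Qed.

Lemma PP_wt e r x M : (0 < e)%N -> (0 < r)%N ->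
  (wt e (PP e r x M))%:Z = \sum_(i < e) Rel id (Yr e r x i) (E (ch (Yr e r x i))).
Proof.
move=> he hr; rewrite wtE //; apply: eq_bigr => i _.
by rewrite run_PP // ch_shf ?Rel_id_shf //; apply: bnd_Yr.
Qed.

Lemma le_sum_abs e (F : nat -> int) j : (j < e)%N -> `|F j| <= \sum_(i < e) `|F i|.
Proof.
move=> hj; rewrite (bigD1 (Ordinal hj)) //= lerDl.
by apply: sumr_ge0 => i _; apply: normr_ge0.
Qed.

Lemma Rouq_large e r x : (0 < e)%N -> (0 < r)%N ->
  exists Mstar : int, forall M, Mstar <= M -> Rouquier e (PP e r x M).
Proof.
move=> he hr.
pose W := \sum_(i < e) Rel id (Yr e r x i) (E (ch (Yr e r x i))).
pose S := \sum_(i < e) `|ch (Yr e r x i)|.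
exists (`|W| + S + S) => M hM i hi.
rewrite PP_wt // -/W !PP_eta //; last exact: ltnW.
have h1 := @le_sum_abs e (fun i => ch (Yr e r x i)) i.+1 hi.
have h0 := @le_sum_abs e (fun i => ch (Yr e r x i)) i (ltnW hi).
rewrite -/S /= in h0 h1.
have hW : W <= `|W| by apply: ler_norm.
have hS : 0 <= S by apply: sumr_ge0 => k _; apply: normr_ge0.
have hMr : M <= M * r%:Z by nia.
have -> : ch (Yr e r x i.+1) + i.+1%:Z * M * r%:Z - (ch (Yr e r x i) + i%:Z * M * r%:Z) + 1 =
          ch (Yr e r x i.+1) - ch (Yr e r x i) + M * r%:Z + 1.
  by rewrite -addn1 PoszD; ring.
move: h0 h1; set a := ch _; set b := ch _ => h0 h1.
have ha := ler_norm a; have hb := ler_norm b.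
have ha' : - `|a| <= a by rewrite lerNl -normrN ler_norm.
have hb' : - `|b| <= b by rewrite lerNl -normrN ler_norm.
lia.
Qed.

Theorem lemma3p8 (e r : nat) (He : (2 <= e)%N) (Hr : (1 <= r)%N)
  (R : mconf r -> Prop) (HR : is_mblock e r R) :
  exists Mstar : int, forall M : int, Mstar <= M ->
    (forall x, R x -> Rouquier e (Psi e r (mstr e r x (fun i => i%:Z * M)))) /\
    (exists B : conf -> Prop, rRouquier_block e r%:Z B /\
       forall x, R x -> B (Psi e r (mstr e r x (fun i => i%:Z * M)))).
Proof.
have he : (0 < e)%N by apply: leq_trans He.
have hr : (0 < r)%N by [].
case: HR => x1 HR.
have [Mstar HM] := @Rouq_large e r x1 he hr.
exists Mstar => M hM.
have P1R : Rouquier e (PP e r x1 M) := HM M hM.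
have Fx : forall x, R x -> mequiv e 1 (single (PP e r x1 M)) (single (PP e r x M)).
  by move=> x /HR hx; apply: PF.
split.
  move=> x Rx; have [ht hw] := @mequiv1_transfer e _ _ he (Fx x Rx).
  exact: (@rRouq_tr e 1 _ _ ht hw P1R).
exists (fun c => mequiv e 1 (single (PP e r x1 M)) (single c)); split; last first.
  by move=> x Rx; apply: Fx.
split.
  by exists (PP e r x1 M) => y.
move=> c hc; have [ht hw] := @mequiv1_transfer e _ _ he hc.
apply: (@rRouq_tr e r%:Z _ _ ht hw); apply: (@rRouq_mono e 1 r%:Z) => //.
Qed.
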